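(* Let $\gamma\in\mathbb{Z}[\mathrm{i}]$ with $|\gamma|>1$, let $(\gamma,D)$ be an integral numeration system, and let $r\ge2$ be a real number such that $D\subseteq D_\gamma:=\{d\in\mathbb{Z}[\mathrm{i}]:|d|\le r|\gamma|\}$. If $n\ge1$ is an integer and $z\in\mathbb{Z}[\mathrm{i}]$ satisfies $|z|\le r|\gamma|^n$, then there exists a word $w=d_{n-1}\cdots d_0\in D_\gamma^n$ with $[w]_\gamma=z$.
   Context: For a finite $D\subset\mathbb{Z}[\mathrm{i}]$ containing $0$, a word $w=w_{n-1}\cdots w_0$ over $D$ has value $[w]_\gamma=\sum_{j=0}^{n-1}w_j\gamma^j$. $(\gamma,D)$ is an integral numeration system if every Gaussian integer has a unique such expansion (up to leading zeros). *)

(* Defs.v *)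
From HB Require Import structures.
From mathcomp Require Import all_boot all_order all_algebra.
From mathcomp Require Import complex.
From mathcomp Require Import reals.
Set Implicit Arguments. Unset Strict Implicit. Unset Printing Implicit Defensive.
Import Order.TTheory GRing.Theory Num.Theory.
Local Open Scope ring_scope.

Section Gauss.
Variable R : realType.

Definition cabs (z : R[i]) : R := Normc.normc z.

Definition gaussInt (z : R[i]) : bool :=
  (@complex.Re R z \in Num.int) && (@complex.Im R z \in Num.int).

(* Value [w]_g of a word.  A word w = w_{n-1} ... w_0 is stored as the
   sequence [:: w_0; w_1; ...; w_{n-1}] (list index j = digit w_j). *)
Definition wval (g : R[i]) (w : seq R[i]) : R[i] :=
  \sum_(j < size w) w`_j * g ^+ j.

Definition word_over (D : seq R[i]) (w : seq R[i]) : bool :=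
  all (fun d => d \in D) w.

(* (g, D) is an integral numeration system: D is a finite set of Gaussian
   integers containing 0, and every Gaussian integer has a unique expansion
   over D up to leading zeros (two expansions with the same value coincide
   after padding the shorter one with leading zeros). *)
Definition integral_numsys (g : R[i]) (D : seq R[i]) : Prop :=
  [/\ gaussInt g,
      all gaussInt D,
      0 \in D,
      (forall z, gaussInt z -> exists w, word_over D w /\ wval g w = z) &
      (forall w1 w2, word_over D w1 -> word_over D w2 ->
         wval g w1 = wval g w2 -> forall j, w1`_j = w2`_j)].

Definition Dgamma (r : R) (g : R[i]) (d : R[i]) : bool :=
  gaussInt d && (cabs d <= r * cabs g).

End Gauss.

(* Main.v *)
Require Import Defs.
From HB Require Import structures.
From mathcomp Require Import all_boot all_order all_algebra.
From mathcomp Require Import complex reals ring lra.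
Import Order.TTheory GRing.Theory Num.Theory.
Local Open Scope ring_scope.
Section S.
Variable R : realType.
Definition NN (z : R[i]) : R := complex.Re z ^+ 2 + complex.Im z ^+ 2.
Lemma NNM (x y : R[i]) : NN (x * y) = NN x * NN y.
Proof. case: x => a b; case: y => c d. rewrite /NN /=. ring. Qed.
Lemma cabsE (z : R[i]) : cabs z = Num.sqrt (NN z).
Proof. by case: z. Qed.
Lemma NN_ge0 (z : R[i]) : 0 <= NN z.
Proof. by rewrite /NN addr_ge0 // sqr_ge0. Qed.
Lemma cabs_ge0 (z : R[i]) : 0 <= cabs z.
Proof. by rewrite cabsE sqrtr_ge0. Qed.
Lemma cabs_sqr (z : R[i]) : cabs z ^+ 2 = NN z.
Proof. by rewrite cabsE sqr_sqrtr // NN_ge0. Qed.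

Lemma trunc_pos (x : R) : 0 <= x -> exists t, [/\ t \is a Num.int, t^+2 <= x^+2 & (x - t)^+2 < 1].
Proof.
move=> x0; exists (Num.floor x)%:~R; split; first exact: intr_int.
- have h1 := floor_le x. have h2 : 0 <= ((Num.floor x)%:~R : R) by rewrite ler0z floor_ge0.
  nra.
- have h1 := floor_le x. have h2 := floorD1_gt x. rewrite intrD in h2. nra.
Qed.
Lemma trunc_ex (x : R) : exists t, [/\ t \is a Num.int, t^+2 <= x^+2 & (x - t)^+2 < 1].
Proof.
have [x0|x0] := lerP 0 x; first exact: trunc_pos.
have [|t [ti h1 h2]] := (@trunc_pos (- x)); first lra.
exists (- t); split; first by rewrite rpredN.
- by rewrite sqrrN -(sqrrN x).
- have -> : x - - t = -(- x - t) by ring. by rewrite sqrrN.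
Qed.

Lemma divstep (g z : R[i]) : gaussInt g -> gaussInt z -> g != 0 ->
  exists q d, [/\ gaussInt q, gaussInt d, z = d + g * q,
     NN q * NN g <= NN z & NN d < 2 * NN g].
Proof.
move=> gg gz g0.
set x := z / g.
have [t1 [i1 a1 b1]] := trunc_ex (complex.Re x).
have [t2 [i2 a2 b2]] := trunc_ex (complex.Im x).
set q : R[i] := Complex t1 t2.
have zx : z = g * x by rewrite /x mulrC divfK.
exists q, (z - g * q); split.
- by rewrite /gaussInt /= i1 i2.
- move: gg gz; rewrite /gaussInt; case: (g) => [g1 g2]; case: (z) => [z1 z2] /=.
  move=> /andP[? ?] /andP[? ?].
  apply/andP; split; rewrite ?(rpredD, rpredB, rpredM, rpredN) //.
- by rewrite subrK.
- rewrite zx NNM mulrC ler_wpM2l ?NN_ge0 // /NN /=. lra.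
- have -> : z - g * q = g * (x - q) by rewrite zx mulrBr.
  rewrite NNM mulrC ltr_pM2r.
  + move: b1 b2; rewrite /q; case: (x) => [x1 x2] /=. rewrite /NN /=. lra.
  + rewrite /NN lt_def NN_ge0 andbT. apply: contra g0; case: (g) => [g1 g2] /=.
    rewrite paddr_eq0 ?sqr_ge0 // !sqrf_eq0 => /andP[/eqP-> /eqP->]. by [].
Qed.
Lemma sq_le (a b : R) : 0 <= a -> 0 <= b -> a^+2 <= b^+2 -> a <= b.
Proof. move=> ha hb h; rewrite leNgt; apply/negP => hl; nra. Qed.

Lemma main_ind (g : R[i]) (r : R) : gaussInt g -> 1 < cabs g -> 2 <= r ->
  forall n, (1 <= n)%N -> forall z, gaussInt z -> cabs z <= r * cabs g ^+ n ->
  exists w, [/\ size w = n, all (Dgamma r g) w & wval g w = z].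
Proof.
move=> gg g1 r2; elim=> [//|n IH] _ z gz hz.
case: n IH hz => [_ hz|n IH hz].
  exists [:: z]; split => //=.
    by rewrite andbT /Dgamma gz -(expr1 (cabs g)).
  by rewrite /wval big_ord1 /= expr0 mulr1.
have g0 : g != 0.
  apply/eqP => g0; move: g1; rewrite g0 cabsE /NN /= expr0n /= addr0 sqrtr0; lra.
have [q [d [gq gd zE hq hd]]] := @divstep g z gg gz g0.
have cg0 : 0 < cabs g by lra.
have hq' : cabs q <= r * cabs g ^+ n.+1.
  rewrite -(ler_pM2r cg0) -mulrA -exprSr.
  apply: le_trans hz.
  apply: sq_le; rewrite ?mulr_ge0 ?cabs_ge0 //.
  by rewrite exprMn !cabs_sqr.
have hd' : cabs d <= r * cabs g.
  apply: sq_le; rewrite ?mulr_ge0 ?cabs_ge0 //; first lra.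
  rewrite exprMn !cabs_sqr.
  have := NN_ge0 g. have : 4 <= r^+2 by nra. nra.
have [w [sw aw vw]] := IH isT q gq hq'.
exists (d :: w); split => /=.
- by rewrite sw.
- by rewrite aw andbT /Dgamma gd hd'.
- rewrite zE /wval /= big_ord_recl /= expr0 mulr1 -vw /wval mulr_sumr.
  congr (_ + _); apply: eq_bigr => i _.
  by rewrite /bump /= exprS mulrCA.
Qed.
End S.

Theorem lemma2p8 (R : realType) (g : R[i]) (D : seq R[i]) (r : R) (n : nat)
    (z : R[i]) :
  gaussInt g -> 1 < cabs g ->
  integral_numsys g D ->
  2 <= r ->
  (forall d, d \in D -> Dgamma r g d) ->
  (1 <= n)%N ->
  gaussInt z -> cabs z <= r * cabs g ^+ n ->
  exists w : seq R[i],
    [/\ size w = n, all (Dgamma r g) w & wval g w = z].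
Proof.
move=> gg g1 _ r2 _ hn gz hz.
exact: (@main_ind R g r gg g1 r2 n hn z gz hz).
Qed.
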